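(* Under Strategy 1 (described in the context), the expected number of uncles created during an attack cycle and eventually referred is $$\mathbb{E}[U]=q+\frac{q^3\gamma}{p-q}-\frac{p^3}{p-q}\Bigl(\frac qp\Bigr)^{n_1+1}\gamma-q^{n_1+1}(1-\gamma).$$
   Context: Honest hashrate $p$, attacker hashrate $q$, $p+q=1$, $0<q<p$; $\gamma\in[0,1]$ is the fraction of honest hashrate mining on the attacker's block during a public competition between equal-height blocks. Each new block is the attacker's with probability $q$, independently. Attack cycles are i.i.d. words in S (attacker block) and H (honest block): H, SHS, SHH, or SSwH with $w$ a Dyck word; $\mathbb{P}[H]=p$, $\mathbb{P}[SHS]=pq^2$, $\mathbb{P}[SHH]=p^2q$, $\mathbb{P}[SSwH]=q^2p(pq)^{|w|}$. Ethereum rules: an uncle is a non-official block whose parent is official; a nephew (official block) may refer an uncle at distance (height difference) at most $n_1$ ($n_1\ge2$ an integer). Strategy 1: the attacker withholds his blocks, and each time the honest miners publish a block he publishes the part of his secret fork of the same height as the public honest chain (creating a competition, in which a fraction $\gamma$ of honest hashrate mines on the attacker's branch); the attacker's fork wins in cycles starting with SS; all miners refer all possible uncles. $U(\omega)$ is the number of uncles created during cycle $\omega$ that are referred by nephews in $\omega$ or in a later cycle. *)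

(* Defs.v *)
From HB Require Import structures.
From mathcomp Require Import all_boot all_order all_algebra.
From mathcomp Require Import all_classical all_reals all_analysis.
Set Implicit Arguments. Unset Strict Implicit. Unset Printing Implicit Defensive.
Import Order.TTheory GRing.Theory Num.Theory.

(* Attack cycles are words over bool: true = S (attacker block),       *)
(* false = H (honest block), listed in mining order.                   *)

Definition dyck (w : seq bool) : bool :=
  [forall i : 'I_(size w).+1, count negb (take i w) <= count id (take i w)]
  && (count id w == count negb w).

(* Blocks of a cycle are stored in mining order:
   the block at index i of the list is the i-th mined block of the cycle.
   - att  : mined by the attacker;
   - ht   : height above the last official block before the cycle;
   - par  : index of the parent block in the cycle, or None when the parent
            is the (official) last block before the cycle;
   - off  : the block is official (belongs to the final official chain);
   - pub  : index of the block of the cycle whose mining triggers the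
            publication of this block (it is public for every block mined
            at a strictly later index). *)
Record block := Block { att : bool; ht : nat; par : option nat; off : bool; pub : nat }.

Definition block0 := Block false 0 None false 0.

Definition nS_before (x : seq bool) (i : nat) := count id (take i x).
Definition nH_before (x : seq bool) (i : nat) := count negb (take i x).
(* position of the t-th (1-based) attacker / honest block of x *)
Definition posS (x : seq bool) (t : nat) :=
  nth 0 [seq i <- iota 0 (size x) | nth false x i] t.-1.
Definition posH (x : seq bool) (k : nat) :=
  nth 0 [seq i <- iota 0 (size x) | ~~ nth false x i] k.-1.

(* Strategy 1, cycles won by the attacker (SHS and SS w H).
   c : choices for honest blocks (c`_k for the (k+1)-th honest block):
   true = mined on the attacker's published branch (fraction gamma),
   false = mined on the honest branch (fraction 1 - gamma).
   The attacker's secret chain has heights 1,2,...; its block of height t is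
   published when the honest public chain reaches height t (t-th honest block),
   or at the end of the cycle.  The k-th honest block has height k; its parent
   is the last official block before the cycle if k = 1, otherwise the
   attacker's published block of height k-1 or the (k-1)-th honest block. *)
Definition attacker_wins_block (x c : seq bool) (i : nat) : block :=
  let s := nS_before x i in
  let k := nH_before x i in
  if nth false x i then
    Block true s.+1 (if s == 0 then None else Some (posS x s)) true
          (maxn i (posH x (minn s.+1 (count negb x))))
  else
    Block false k.+1
          (if k == 0 then None
           else if nth false c k then Some (posS x k) else Some (posH x k))
          false i.

Definition cycle_blocks (x c : seq bool) : seq block :=
  if x == [:: false] then [:: Block false 1 None true 0]
  else if x == [:: true; false; false] then
    let g := nth false c 1 in
    (* S1 published when H1 is mined; H2 mined on S1 (g) or on H1 *)
    [:: Block true 1 None g 1; Block false 1 None (~~ g) 1;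
        Block false 2 (Some (if g then 0 else 1)) true 2]
  else [seq attacker_wins_block x c i | i <- iota 0 (size x)].

Definition is_uncle (bs : seq block) (i : nat) : bool :=
  let b := nth block0 bs i in
  ~~ off b && (match par b with None => true | Some j => off (nth block0 bs j) end).

Definition tip (bs : seq block) : nat := \max_(b <- bs | off b) ht b.

(* An uncle u is referred if some official block mined after u was published
   has height in (ht u, ht u + n1] (nephew in the cycle), or if the first
   official block after the cycle (height tip+1, mined in a later cycle, after
   u is public) is at distance at most n1. *)
Definition referred (n1 : nat) (bs : seq block) (i : nat) : bool :=
  let u := nth block0 bs i in
  has (fun j => let b := nth block0 bs j in
                [&& off b, pub u < j, ht u < ht b & ht b <= ht u + n1])
      (iota 0 (size bs))
  || (tip bs < ht u + n1).

Definition Uc (n1 : nat) (bs : seq block) : nat :=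
  count (fun i => is_uncle bs i && referred n1 bs i) (iota 0 (size bs)).

Local Open Scope ring_scope.

Definition Ecyc {R : realType} (gamma : R) (n1 : nat) (x : seq bool) : R :=
  \sum_(c : (count negb x).-tuple bool)
     (\prod_(b <- c) (if b then gamma else 1 - gamma))
     * (Uc n1 (cycle_blocks x c))%:R.

(* partial expectation of U: cycles H, SHS, SHH, and SS w H with |w| < N,
   where |w| is the number of H in w (w of length 2|w|). *)
Definition EU_partial {R : realType} (p q gamma : R) (n1 : nat) (N : nat) : R :=
  p * Ecyc gamma n1 [:: false]
  + p * q ^+ 2 * Ecyc gamma n1 [:: true; false; true]
  + p ^+ 2 * q * Ecyc gamma n1 [:: true; false; false]
  + \sum_(n < N) \sum_(w : (2 * n).-tuple bool | dyck w)
        q ^+ 2 * p * (p * q) ^+ n * Ecyc gamma n1 (true :: true :: rcons w false).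

(* Main.v *)
Require Import Defs.
From HB Require Import structures.
From mathcomp Require Import all_boot all_order all_algebra.
From mathcomp Require Import all_classical all_reals all_analysis.
From mathcomp Require Import zify ring lra.
Import Order.TTheory GRing.Theory Num.Theory numFieldNormedType.Exports.

Lemma nS_succ x i : (i < size x)%N -> nS_before x i.+1 = (nS_before x i + nth false x i)%N.
Proof. by move=> H; rewrite /nS_before (take_nth false H) -cats1 count_cat /= addn0. Qed.
Lemma nH_succ x i : (i < size x)%N -> nH_before x i.+1 = (nH_before x i + ~~ nth false x i)%N.
Proof. by move=> H; rewrite /nH_before (take_nth false H) -cats1 count_cat /= addn0. Qed.
Lemma count_take_le (a : pred bool) x i : (count a (take i x) <= count a x)%N.
Proof. by rewrite -{2}(cat_take_drop i x) count_cat leq_addr. Qed.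
Lemma nS_mono x i j : (i <= j)%N -> (nS_before x i <= nS_before x j)%N.
Proof. by move=> H; rewrite /nS_before -(take_takel x H) count_take_le. Qed.
Lemma nS_le x i : (nS_before x i <= count id x)%N.
Proof. exact: count_take_le. Qed.
Lemma nH_le x i : (nH_before x i <= count negb x)%N.
Proof. exact: count_take_le. Qed.
Lemma nS_size x : nS_before x (size x) = count id x.
Proof. by rewrite /nS_before take_size. Qed.

Lemma nS_ivt x a b t : (a <= b)%N -> (b <= size x)%N ->
  (nS_before x a <= t < nS_before x b)%N ->
  exists j, [/\ (a <= j < b)%N, nth false x j & nS_before x j = t].
Proof.
elim: b => [|b IH] Hab Hb /andP[H1 H2].
  by rewrite leqn0 in Hab; move/eqP: Hab => Ha; subst a; have := leq_ltn_trans H1 H2; rewrite ltnn.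
case: (ltngtP a b.+1) Hab => // [Hab _|Hab _]; last first.
  by subst a; have := leq_ltn_trans H1 H2; rewrite ltnn.
case: (ltnP t (nS_before x b)) => Ht.
  have [j [/andP[Hj1 Hj2] Hj3 Hj4]] := IH Hab (ltnW Hb) (introT andP (conj H1 Ht)).
  by exists j; split => //; rewrite Hj1 ltnS ltnW.
move: H2; rewrite nS_succ //; case Hx: (nth false x b) => /=; last first.
  by rewrite addn0 => H2; have := leq_ltn_trans Ht H2; rewrite ltnn.
rewrite addn1 ltnS => H2; exists b; split => //; first by rewrite -ltnS Hab ltnSn.
by apply/eqP; rewrite eqn_leq H2 Ht.
Qed.

Lemma posS_spec x t : (0 < t <= count id x)%N ->
  (posS x t < size x)%N /\ nth false x (posS x t).
Proof.
move=> /andP[Ht1 Ht2].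
have Hsz : size [seq i <- iota 0 (size x) | nth false x i] = count id x.
  by rewrite size_filter -[in RHS](mkseq_nth false x) /mkseq count_map.
have : posS x t \in [seq i <- iota 0 (size x) | nth false x i].
  by apply: mem_nth; rewrite Hsz; case: t Ht1 Ht2.
by rewrite mem_filter mem_iota /= add0n => /andP[-> ->].
Qed.

Lemma posH_spec x t : (0 < t <= count negb x)%N ->
  (posH x t < size x)%N /\ ~~ nth false x (posH x t).
Proof.
move=> /andP[Ht1 Ht2].
have Hsz : size [seq i <- iota 0 (size x) | ~~ nth false x i] = count negb x.
  by rewrite size_filter -[in RHS](mkseq_nth false x) /mkseq count_map.
have : posH x t \in [seq i <- iota 0 (size x) | ~~ nth false x i].
  by apply: mem_nth; rewrite Hsz; case: t Ht1 Ht2.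
by rewrite mem_filter mem_iota /= add0n => /andP[-> ->].
Qed.

Lemma tip_ge (bs : seq block) j : (j < size bs)%N -> off (nth block0 bs j) ->
  (ht (nth block0 bs j) <= tip bs)%N.
Proof.
rewrite /tip; elim: bs j => [//|b bs IH] [|j] /= Hj Ho; rewrite big_cons.
  by rewrite Ho leq_maxl.
by case: (off b); [apply: leq_trans (IH j Hj Ho) (leq_maxr _ _)|apply: IH].
Qed.

Lemma tip_le (bs : seq block) m :
  (forall j, (j < size bs)%N -> off (nth block0 bs j) -> (ht (nth block0 bs j) <= m)%N) ->
  (tip bs <= m)%N.
Proof.
rewrite /tip; elim: bs => [|b bs IH] H; first by rewrite big_nil.
rewrite big_cons.
have H' : (\max_(b0 <- bs | off b0) ht b0 <= m)%N by apply: IH => j Hj; apply: (H j.+1).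
case Hb: (off b) => //; rewrite geq_max H' andbT; exact: (H 0%N).
Qed.

Section Key.
Variables (x c : seq bool) (n1 : nat).
Hypothesis Hx1 : x != [:: false].
Hypothesis Hx2 : x != [:: true; false; false].
Hypothesis Hpath : forall i, (i < size x)%N -> ~~ nth false x i ->
  (nH_before x i < nS_before x i)%N.

Lemma key i : (i < size x)%N ->
  (is_uncle (cycle_blocks x c) i && referred n1 (cycle_blocks x c) i) =
  [&& ~~ nth false x i, (nS_before x i - nH_before x i <= n1)%N &
      (nH_before x i == 0)%N || nth false c (nH_before x i)].
Proof.
move=> Hi.
rewrite /cycle_blocks (negbTE Hx1) (negbTE Hx2).
set bs := map _ _.
have Hb : forall j, (j < size x)%N -> nth block0 bs j = attacker_wins_block x c j.
  by move=> j Hj; rewrite (nth_map 0) ?size_iota // nth_iota.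
have Hsz : size bs = size x by rewrite size_map size_iota.
rewrite /is_uncle /referred Hb //.
case Hxi: (nth false x i); first by rewrite /attacker_wins_block Hxi.
rewrite /attacker_wins_block Hxi /=.
set k := nH_before x i; set s := nS_before x i.
have Hks : (k < s)%N by apply: Hpath => //; rewrite Hxi.
have Hoff : forall j, (j < size x)%N -> off (nth block0 bs j) = nth false x j.
  by move=> j Hj; rewrite Hb // /attacker_wins_block; case: (nth false x j).
have Hht : forall j, (j < size x)%N -> nth false x j ->
    ht (nth block0 bs j) = (nS_before x j).+1.
  by move=> j Hj Hxj; rewrite Hb // /attacker_wins_block Hxj.
have Hsx : (s <= count id x)%N by apply: nS_le.
have Hkx : (k < count negb x)%N.
  by have := nH_le x i.+1; rewrite nH_succ // Hxi addn1.
have -> : match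
    (if k == 0 then None
     else if nth false c k then Some (posS x k) else Some (posH x k))
  with | Some j => off (nth block0 bs j) | None => true end
  = (k == 0) || nth false c k.
  case: eqP => [//|/eqP Hk0]; rewrite -lt0n in Hk0; case Hc: (nth false c k).
    have [H1 H2] := @posS_spec x k (introT andP (conj (Hk0 : (0 < k)%N) (ltnW (leq_trans Hks Hsx)))).
    by rewrite Hoff.
  have [H1 H2] := @posH_spec x k (introT andP (conj (Hk0 : (0 < k)%N) (ltnW Hkx))).
  by rewrite Hoff // (negbTE H2).
rewrite andbC; congr (_ && _).
rewrite leq_subLR; apply/idP/idP.
  case/orP.
    case/hasP => j; rewrite Hsz mem_iota add0n => /andP[_ Hj] /and4P[Ho Hij Hh1 Hh2].
    rewrite Hoff // in Ho; rewrite Hht // addSn ltnS in Hh2.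
    exact: leq_trans (@nS_mono x i j (ltnW Hij)) Hh2.
  move=> Htip.
  have Hs0 : (0 < s)%N by apply: leq_ltn_trans Hks.
  have Hlt : (nS_before x 0 <= s.-1 < s)%N by rewrite ltn_predL Hs0 /nS_before take0.
  have [j [/andP[_ Hj] Hxj Hsj]] := @nS_ivt x 0 i s.-1 (leq0n _) (ltnW Hi)
     Hlt.
  have Hjx : (j < size x)%N by apply: ltn_trans Hi.
  have : (ht (nth block0 bs j) <= tip bs)%N.
    by apply: tip_ge; rewrite ?Hsz ?Hoff.
  rewrite Hht // Hsj prednK // => H; have := leq_ltn_trans H Htip.
  by rewrite addSn ltnS.
move=> Hs; case: (ltnP s (count id x)) => Hsc.
  have Hlt : (s < nS_before x (size x))%N by rewrite nS_size.
  have [j [/andP[Hij Hj] Hxj Hsj]] := @nS_ivt x i (size x) s (ltnW Hi) (leqnn _)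
     (introT andP (conj (leqnn _) Hlt)).
  apply/orP; left; apply/hasP; exists j; first by rewrite Hsz mem_iota add0n.
  have Hij' : (i < j)%N.
    by rewrite ltn_neqAle Hij andbT; apply/eqP => Hij2; rewrite Hij2 Hxj in Hxi.
  by rewrite Hoff // Hxj Hij' Hht // Hsj ltnS Hks addSn ltnS Hs.
apply/orP; right.
have Htip : (tip bs <= s)%N.
  apply: tip_le => j Hj Ho.
  rewrite Hsz in Hj; rewrite Hoff // in Ho; rewrite Hht //.
  have := @nS_succ x j Hj; rewrite Ho addn1 => <-; exact: leq_trans (nS_le _ _) Hsc.
by rewrite addSn ltnS (leq_trans Htip Hs).
Qed.
End Key.

Local Open Scope ring_scope.

Fixpoint allseq (m : nat) : seq (seq bool) :=
  if m is m'.+1 then map (cons true) (allseq m') ++ map (cons false) (allseq m')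
  else [:: [::]].

Lemma allseq_mem m s : (s \in allseq m) = (size s == m).
Proof.
elim: m s => [|m IH] [|b s] //=.
- by rewrite mem_cat; apply/orP => -[] /mapP [t _].
- rewrite mem_cat eqSS -IH; case: b.
    rewrite (mem_map (fun a b (H : true :: a = true :: b) => congr1 behead H)).
    by apply/orP/idP => [[//|/mapP [t _]//]|]; left.
  rewrite (mem_map (fun a b (H : false :: a = false :: b) => congr1 behead H)).
  by apply/orP/idP => [[/mapP [t _]//|//]|]; right.
Qed.

Lemma allseq_uniq m : uniq (allseq m).
Proof.
elim: m => [//|m IH] /=; rewrite cat_uniq !map_inj_uniq ?IH //=; try by move=> a b [].
rewrite andbT; apply/hasPn => s /mapP [t _ ->]; by apply/mapP => -[u _].
Qed.

Lemma allseq_sumS (V : nmodType) m (F : seq bool -> V) :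
  \sum_(s <- allseq m.+1) F s = \sum_(s <- allseq m) (F (true :: s) + F (false :: s)).
Proof. by rewrite /= big_cat !big_map big_split. Qed.

Lemma tuple_sumE (V : nmodType) m (F : seq bool -> V) :
  \sum_(t : m.-tuple bool) F t = \sum_(s <- allseq m) F s.
Proof.
rewrite -(big_image _ _ (fun t : m.-tuple bool => tval t) predT F).
apply: perm_big; apply: uniq_perm.
- by rewrite map_inj_uniq ?enum_uniq //; apply: val_inj.
- exact: allseq_uniq.
move=> s; rewrite allseq_mem; apply/mapP/idP => [[t _ ->]|Hs].
  by rewrite size_tuple.
by exists (Tuple Hs); rewrite ?mem_enum.
Qed.

Section Ec.
Variables (R : realType) (gamma : R) (n1 : nat).

Definition wg (b : bool) : R := if b then gamma else 1 - gamma.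

Lemma sum_prod1 m : \sum_(s <- allseq m) \prod_(b <- s) wg b = 1.
Proof.
elim: m => [|m IH]; first by rewrite /= big_cons big_nil big_nil addr0.
rewrite allseq_sumS -[RHS]IH; apply: eq_bigr => s _.
by rewrite !big_cons /= -mulrDl addrC subrK mul1r.
Qed.

Lemma sum_prod_nth m k : (k < m)%N ->
  \sum_(s <- allseq m) (\prod_(b <- s) wg b) * (nth false s k)%:R = gamma.
Proof.
elim: m k => [//|m IH] [|k] Hk; rewrite allseq_sumS.
  under eq_bigr => s _ do rewrite !big_cons /= mulr1 mulr0 addr0.
  by rewrite -mulr_sumr sum_prod1 mulr1.
rewrite -[RHS](IH k Hk); apply: eq_bigr => s _.
by rewrite !big_cons /= -!mulrA -mulrDl addrC subrK mul1r.
Qed.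

Definition Fpay (s k : nat) : R :=
  if (s - k <= n1)%N then (if k == 0%N then 1 else gamma) else 0.

Lemma size_cb x c : x != [:: false] -> x != [:: true; false; false] ->
  size (cycle_blocks x c) = size x.
Proof.
by move=> H1 H2; rewrite /cycle_blocks (negbTE H1) (negbTE H2) size_map size_iota.
Qed.

Lemma count_natr (T : Type) (a : pred T) r : (count a r)%:R = \sum_(i <- r) (a i : nat)%:R :> R.
Proof. by elim: r => [|y r IH]; rewrite ?big_nil ?big_cons //= natrD IH. Qed.

Lemma Ecyc_formula x :
  x != [:: false] -> x != [:: true; false; false] ->
  (forall i, (i < size x)%N -> ~~ nth false x i -> (nH_before x i < nS_before x i)%N) ->
  Ecyc gamma n1 x = \sum_(i <- iota 0 (size x))
     (if nth false x i then 0 else Fpay (nS_before x i) (nH_before x i)).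
Proof.
move=> Hx1 Hx2 Hpath.
have Hsz c : size (cycle_blocks x c) = size x by apply: size_cb.
rewrite /Ecyc (@tuple_sumE _ _ (fun s => (\prod_(b <- s) (if b then gamma else 1 - gamma)) *
    (Uc n1 (cycle_blocks x s))%:R)).
rewrite (eq_big_seq (fun s => \sum_(i <- iota 0 (size x))
   (\prod_(b <- s) wg b) * ([&& ~~ nth false x i,
      (nS_before x i - nH_before x i <= n1)%N &
      (nH_before x i == 0)%N || nth false s (nH_before x i)] : nat)%:R)); last first.
  move=> s Hs; rewrite /Uc Hsz (eq_in_count (a2 := fun i => [&& ~~ nth false x i,
      (nS_before x i - nH_before x i <= n1)%N &
      (nH_before x i == 0)%N || nth false s (nH_before x i)])); last first.
    move=> i; rewrite mem_iota add0n; case/andP => _ Hi; exact: key.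
  rewrite count_natr mulr_sumr; done.
rewrite exchange_big /=; apply: eq_big_seq => i; rewrite mem_iota add0n => /andP[_ Hi].
case Hxi: (nth false x i) => /=.
  by rewrite big1 // => s _; rewrite mulr0.
rewrite /Fpay; case: (_ <= n1)%N => /=; last by rewrite big1 // => s _; rewrite mulr0.
case: eqP => _ /=.
  by under eq_bigr do rewrite mulr1; rewrite sum_prod1.
apply: sum_prod_nth.
by have := nH_le x i.+1; rewrite nH_succ // Hxi addn1.
Qed.
End Ec.

Fixpoint hitg (s k : nat) (u : seq bool) : bool :=
  match u with
  | [::] => s == k.+1
  | b :: u' => (k.+2 <= s)%N && (if b then hitg s.+1 k u' else hitg s k.+1 u')
  end.

Lemma hitg_char s k u : hitg s k u =
  all (fun j => (k + nH_before u j + 2 <= s + nS_before u j)%N) (iota 0 (size u))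
  && (s + count id u == k + count negb u + 1)%N.
Proof.
elim: u s k => [|b u IH] s k /=; first by apply/eqP/eqP; lia.
rewrite -(addn0 1%N) iotaDl all_map.
have E j : nH_before (b :: u) j.+1 = (~~ b + nH_before u j)%N by [].
have E' j : nS_before (b :: u) j.+1 = (b + nS_before u j)%N by [].
have E0 : nH_before (b :: u) 0 = 0%N by [].
have E0' : nS_before (b :: u) 0 = 0%N by [].
rewrite E0 E0'.
rewrite (eq_all (a2 := fun j => ((k + ~~b) + nH_before u j + 2 <= (s + b) + nS_before u j)%N)); last first.
  by move=> j /=; rewrite add1n E E' !addnA (addnC k) (addnC s).
have -> : (k + 0 + 2 <= s + 0)%N = (k.+1 < s)%N by apply/idP/idP; lia.
clear E E' E0 E0'; case: b; rewrite IH /= ?addn1 ?addn0 -andbA; congr (_ && (_ && _)); apply/eqP/eqP; lia.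
Qed.


Lemma allseq_sum_rcons (V : nmodType) m (F : seq bool -> V) :
  \sum_(u <- allseq m.+1) F u = \sum_(w <- allseq m) (F (rcons w true) + F (rcons w false)).
Proof.
elim: m F => [|m IH] F.
  by rewrite allseq_sumS /= !big_cons !big_nil.
rewrite allseq_sumS (IH (fun s => F (true :: s) + F (false :: s))).
rewrite [RHS]allseq_sumS; apply: eq_bigr => w _ /=.
by rewrite addrACA.
Qed.

Arguments Fpay {R}.
Section DP.
Variables (R : realType) (p q gamma : R) (n1 : nat).

Definition wt (u : seq bool) : R := \prod_(b <- u) (if b then q else p).

Fixpoint Dg (s k : nat) (u : seq bool) : R :=
  match u with
  | [::] => 0
  | b :: u' => if b then Dg s.+1 k u' else Fpay gamma n1 s k + Dg s k.+1 u'
  end.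

Lemma Dg_sum s k u : Dg s k u = \sum_(i <- iota 0 (size u))
  (if nth false u i then 0 else Fpay gamma n1 (s + nS_before u i) (k + nH_before u i)).
Proof.
elim: u s k => [|b u IH] s k /=; first by rewrite big_nil.
rewrite big_cons /= -(addn0 1%N) iotaDl big_map.
have E0 : nH_before (b :: u) 0 = 0%N by [].
have E0' : nS_before (b :: u) 0 = 0%N by [].
rewrite E0 E0' !addn0.
have E j : nH_before (b :: u) (1 + j) = (~~ b + nH_before u j)%N by [].
have E' j : nS_before (b :: u) (1 + j) = (b + nS_before u j)%N by [].
under eq_bigr => j _ do rewrite E E' /=.
clear E E' E0 E0'; case: b; rewrite IH /= ?add0r; last congr (_ + _);
  by apply: eq_bigr => j _; rewrite ?add0n ?add1n ?addSn ?addnS.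
Qed.

Definition Z (m s k : nat) : R := \sum_(u <- allseq m) (hitg s k u)%:R * wt u * Dg s k u.
Definition P (m s k : nat) : R := \sum_(u <- allseq m) (hitg s k u)%:R * wt u.

Lemma Z0 s k : Z 0 s k = 0.
Proof. by rewrite /Z /= big_cons big_nil /= mulr0 addr0. Qed.
Lemma P0 s k : P 0 s k = (s == k.+1)%:R.
Proof. by rewrite /P /= big_cons big_nil /wt big_nil mulr1 addr0. Qed.

Lemma ZS m s k : Z m.+1 s k = (k.+2 <= s)%N%:R *
  (q * Z m s.+1 k + p * (Fpay gamma n1 s k * P m s k.+1 + Z m s k.+1)).
Proof.
rewrite /Z /P allseq_sumS.
transitivity (\sum_(u <- allseq m) (k.+2 <= s)%N%:R * (q * ((hitg s.+1 k u)%:R * wt u * Dg s.+1 k u)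
   + p * (Fpay gamma n1 s k * ((hitg s k.+1 u)%:R * wt u) + (hitg s k.+1 u)%:R * wt u * Dg s k.+1 u))).
  apply: eq_bigr => u _ /=; rewrite /wt !big_cons /=.
  case: (k.+2 <= s)%N => /=; rewrite ?mul0r ?mul1r ?addr0 //; ring.
by rewrite -mulr_sumr big_split -!mulr_sumr big_split -!mulr_sumr.
Qed.

Lemma PS m s k : P m.+1 s k = (k.+2 <= s)%N%:R * (q * P m s.+1 k + p * P m s k.+1).
Proof.
rewrite /P allseq_sumS.
transitivity (\sum_(u <- allseq m) (k.+2 <= s)%N%:R * (q * ((hitg s.+1 k u)%:R * wt u)
   + p * ((hitg s k.+1 u)%:R * wt u))).
  apply: eq_bigr => u _ /=; rewrite /wt !big_cons /=.
  case: (k.+2 <= s)%N => /=; rewrite ?mul0r ?mul1r ?addr0 //; ring.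
by rewrite -mulr_sumr big_split -!mulr_sumr.
Qed.
End DP.
Arguments Fpay {R}. Arguments Z {R}. Arguments P {R}. Arguments Dg {R}. Arguments wt {R}.

Section Cum.
Variables (R : realType) (p q gamma : R) (n1 : nat).

Definition ZC (M s k : nat) : R := \sum_(m < M) Z p q gamma n1 m s k.
Definition PC (M s k : nat) : R := \sum_(m < M) P p q m s k.

Lemma ZC0 s k : ZC 0 s k = 0. Proof. by rewrite /ZC big_ord0. Qed.
Lemma PC0 s k : PC 0 s k = 0. Proof. by rewrite /PC big_ord0. Qed.

Lemma ZCS M s k : ZC M.+1 s k = (k.+2 <= s)%N%:R *
  (q * ZC M s.+1 k + p * (Fpay gamma n1 s k * PC M s k.+1 + ZC M s k.+1)).
Proof.
rewrite /ZC /PC big_ord_recl Z0 add0r.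
under eq_bigr => i _ do rewrite ZS.
by rewrite -mulr_sumr big_split -!mulr_sumr big_split -!mulr_sumr.
Qed.

Lemma PCS M s k : PC M.+1 s k = (s == k.+1)%:R + (k.+2 <= s)%N%:R *
  (q * PC M s.+1 k + p * PC M s k.+1).
Proof.
rewrite /PC big_ord_recl P0.
under eq_bigr => i _ do rewrite PS.
by rewrite -mulr_sumr big_split -!mulr_sumr.
Qed.
End Cum.
Arguments Fpay {R}. Arguments Z {R}. Arguments P {R}. Arguments Dg {R}. Arguments wt {R}.

Section Phi.
Variables (R : realType) (p q gamma : R) (n1 : nat).
Hypothesis hpq : p + q = 1.
Hypothesis hq0 : 0 < q.
Hypothesis hqp : q < p.
Hypothesis hn1 : (2 <= n1)%N.

Definition rr : R := p / q.
Definition aa : R := p / (p - q).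
Definition DD : R := - q ^+ 2 / ((p - q) ^+ 2 * rr ^+ n1.-1).
Definition GG (j : nat) : R := aa * (j%:R - 1) + DD * (rr ^+ j - rr).
Definition gg (L : nat) : R := GG (minn L n1).
Definition Psi (L : nat) : R := if (2 <= L <= n1)%N then 1 - q ^+ (n1 - L).+1 else 0.
Definition Phi (s k : nat) : R :=
  gamma * gg (s - k) + (if k == 0%N then (1 - gamma) * Psi (s - k) else 0).

Lemma hp : p = 1 - q. Proof. by rewrite -hpq addrK. Qed.
Lemma hq0' : q != 0. Proof. by rewrite gt_eqF. Qed.
Lemma hpq0 : p - q != 0. Proof. by rewrite subr_eq0 gt_eqF. Qed.
Lemma hp0 : 0 < p. Proof. exact: lt_trans hqp. Qed.
Lemma rr_gt0 : 0 < rr. Proof. by rewrite /rr divr_gt0 // hp0. Qed.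

Lemma gg_rec L : (2 <= L)%N -> gg L = q * gg L.+1 + p * ((L <= n1)%N%:R + gg L.-1).
Proof.
move=> HL; rewrite /gg.
case: (ltngtP L n1) => HLn.
- rewrite (minn_idPl HLn) (minn_idPl (leq_trans (leq_pred L) (ltnW HLn))).
  case: L HL HLn => [|[|l]] // _ _ /=.
  rewrite /GG -!natr1 !exprS /aa /rr hp.
  field; by rewrite -hp hq0' hpq0.
- rewrite (minn_idPr (ltnW (ltn_trans HLn (ltnSn _)))).
  have -> : minn L.-1 n1 = n1 by apply/minn_idPr; case: L HL HLn => [|L] //.
  by rewrite add0r -mulrDl addrC hpq mul1r.
- rewrite /GG /DD -HLn (minn_idPr (leqnSn L)) (minn_idPl (leq_pred L)).
  case: L HL HLn => [|m] // _ _ /=.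
  rewrite -!natr1 (exprS rr m).
  have Hr : rr ^+ m != 0 by rewrite expf_neq0 // gt_eqF // rr_gt0.
  move: Hr; set X := rr ^+ m => Hr; clearbody X.
  rewrite /aa /rr hp.
  field; by rewrite -hp hq0' hpq0 Hr.
Qed.

Lemma Psi_rec L : (2 <= L)%N -> Psi L = q * Psi L.+1 + p * (L <= n1)%N%:R.
Proof.
move=> HL; rewrite /Psi; case: (ltngtP L n1) => HLn.
- rewrite HL ltnS (ltnW HL) /=.
  rewrite -(subnSK HLn); set d := (n1 - L.+1)%N; rewrite hp (exprS q d.+1); ring.
- by rewrite !andbF mulr0 mulr0 addr0.
- by rewrite HL andbF /= -HLn subnn expr1 mulr0 add0r mulr1 hp.
Qed.

Lemma Phi_rec s k : (k.+2 <= s)%N ->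
  Phi s k = q * Phi s.+1 k + p * (Fpay gamma n1 s k + Phi s k.+1).
Proof.
move=> Hs; rewrite /Phi /Fpay.
have E1 : (s.+1 - k = (s - k).+1)%N by lia.
have E2 : (s - k.+1 = (s - k).-1)%N by lia.
have HL : (2 <= s - k)%N by lia.
rewrite E1 E2 (@gg_rec _ HL) (@Psi_rec _ HL) /=.
case: (s - k <= n1)%N; case: eqP => _ /=; ring.
Qed.

Lemma Phi1 k : Phi k.+1 k = 0.
Proof.
rewrite /Phi /gg /Psi.
have -> : (k.+1 - k = 1)%N by lia.
rewrite (minn_idPl (leq_trans (isT : (1 <= 2)%N) hn1)) /GG /= subrr mulr0 subrr mulr0 addr0 mulr0 add0r.
by case: eqP; rewrite ?mulr0.
Qed.

Definition Kb : R := aa * (n1%:R + 1) + `|DD| * (rr ^+ n1 + rr) + 1.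

Lemma rr_ge1 : 1 <= rr.
Proof. by rewrite /rr ler_pdivlMr // mul1r ltW. Qed.
Lemma aa_gt0 : 0 < aa.
Proof. by rewrite /aa divr_gt0 ?hp0 // subr_gt0. Qed.

Lemma Phi_bound s k : 0 <= gamma -> gamma <= 1 -> `|Phi s k| <= Kb.
Proof.
move=> hg0 hg1.
have Hg : `|gg (s - k)| <= aa * (n1%:R + 1) + `|DD| * (rr ^+ n1 + rr).
  rewrite /gg /GG; set j := minn (s - k) n1.
  have Hj : (j <= n1)%N by rewrite geq_minr.
  apply: (le_trans (ler_normD _ _)); apply: lerD.
    rewrite normrM ger0_norm ?(ltW aa_gt0) // ler_wpM2l ?(ltW aa_gt0) //.
    apply: (le_trans (ler_normB _ _)); rewrite normr1 ger0_norm // lerD2r ler_nat //.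
  rewrite normrM ler_wpM2l //.
  apply: (le_trans (ler_normB _ _)).
  rewrite !ger0_norm ?exprn_ge0 ?(ltW rr_gt0) // lerD2r.
  exact: (ler_weXn2l rr_ge1).
have HPsi : `|Psi (s - k)| <= 1.
  rewrite /Psi; case: ifP => _; last by rewrite normr0.
  have H0 : 0 <= q ^+ (n1 - (s - k)).+1 by rewrite exprn_ge0 // ltW.
  have H1 : q ^+ (n1 - (s - k)).+1 <= 1 by rewrite exprn_ile1 // ltW // (lt_trans hqp) // -hpq ltrDl.
  rewrite ger0_norm; last by rewrite subr_ge0.
  by rewrite lerBlDr lerDl.
rewrite /Phi /Kb; apply: (le_trans (ler_normD _ _)); apply: lerD.
  rewrite normrM ger0_norm //; apply: le_trans Hg.
  by rewrite -[X in _ <= X]mul1r ler_wpM2r.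
case: eqP => _; last by rewrite normr0.
rewrite normrM ger0_norm ?subr_ge0 //; apply: le_trans HPsi.
by rewrite -[X in _ <= X]mul1r ler_wpM2r // lerBlDr lerDl.
Qed.

End Phi.
Arguments Fpay {R}. Arguments Z {R}. Arguments P {R}. Arguments Dg {R}. Arguments wt {R}.

Section Err.
Variables (R : realType) (p q gamma : R) (n1 : nat).
Hypothesis hpq : p + q = 1.
Hypothesis hq0 : 0 < q.
Hypothesis hqp : q < p.
Hypothesis hg0 : 0 <= gamma.
Hypothesis hg1 : gamma <= 1.
Hypothesis hn1 : (2 <= n1)%N.

Let hp0 : 0 < p := lt_trans hq0 hqp.
Let Hp : p = 1 - q. Proof. by rewrite -hpq addrK. Qed.

Definition lam : R := (2 * q)^-1.
Definition r0 : R := q * lam + p / lam.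
Definition rho : R := (1 + r0) / 2.
Definition KK : R := Kb R p q n1 + p / (rho - r0).

Lemma lam_gt0 : 0 < lam. Proof. by rewrite /lam invr_gt0 mulr_gt0. Qed.
Lemma lam_ge1 : 1 <= lam.
Proof. rewrite /lam invf_ge1; move: hpq hq0 hqp => ? ? ?; [lra|]. rewrite mulr_gt0 //. Qed.
Lemma r0E : r0 = 1 / 2 + 2 * p * q.
Proof. rewrite /r0 /lam; field; rewrite gt_eqF //. Qed.
Lemma r0_ge0 : 0 <= r0.
Proof. rewrite r0E; move: hp0 hq0 => ? ?; apply: addr_ge0; [lra| rewrite !mulr_ge0 //; lra]. Qed.
Lemma r0_lt1 : r0 < 1.
Proof. rewrite r0E; have : 0 < (p - q) * (p - q) by rewrite mulr_gt0 // subr_gt0. move: hpq => ?. nra. Qed.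
Lemma r0_rho : r0 < rho.
Proof. have := r0_lt1; rewrite /rho; lra. Qed.
Lemma rho_lt1 : rho < 1.
Proof. have := r0_lt1; rewrite /rho; lra. Qed.
Lemma rho_ge0 : 0 <= rho.
Proof. have := r0_ge0; rewrite /rho; lra. Qed.
Lemma Kb_ge0 : 0 <= Kb R p q n1.
Proof. exact: le_trans (normr_ge0 _) (@Phi_bound R p q gamma n1 hpq hq0 hqp 0 0 hg0 hg1). Qed.
Lemma KK_ge : p <= KK * (rho - r0).
Proof.
rewrite /KK mulrDl divfK ?gt_eqF ?subr_gt0 ?r0_rho //.
by rewrite lerDr mulr_ge0 ?Kb_ge0 // subr_ge0 ltW // r0_rho.
Qed.
Lemma KK_ge0 : 0 <= KK.
Proof. by rewrite /KK addr_ge0 ?Kb_ge0 // divr_ge0 ?(ltW hp0) // subr_ge0 ltW // r0_rho. Qed.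

Lemma B_bound M s k : (k < s)%N ->
  0 <= 1 - PC R p q M s k /\ 1 - PC R p q M s k <= r0 ^+ M * lam ^+ (s - k).
Proof.
elim: M s k => [|M IH] s k Hks.
  by rewrite PC0 subr0 expr0 mul1r; split => //; apply: exprn_ege1 lam_ge1.
rewrite PCS; case: (ltnP k.+1 s) => Hne; last first.
  have -> : s = k.+1 by lia.
  rewrite eqxx mul0r addr0 subrr; split => //.
  by rewrite mulr_ge0 // exprn_ge0 ?r0_ge0 ?(ltW lam_gt0).
have Hk2 : (k.+2 <= s)%N by lia.
rewrite (gtn_eqF Hne) /= ?mulr0n ?mulr1n add0r mul1r.
have [A1 A2] := IH s.+1 k (ltnW (ltnW Hk2)).
have [B1 B2] := IH s k.+1 Hk2.
have -> : 1 - (q * PC R p q M s.+1 k + p * PC R p q M s k.+1) =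
  q * (1 - PC R p q M s.+1 k) + p * (1 - PC R p q M s k.+1) by rewrite Hp; ring.
split; first by rewrite addr_ge0 // mulr_ge0 // ltW.
apply: le_trans (lerD (ler_wpM2l (ltW hq0) A2) (ler_wpM2l (ltW hp0) B2)) _.
have [l Hl] : exists l, (s - k = l.+2)%N by exists (s - k - 2)%N; lia.
have E1 : (s.+1 - k = l.+3)%N by lia.
have E2 : (s - k.+1 = l.+1)%N by lia.
rewrite E1 E2 Hl !exprS /r0.
have Hl0 : lam != 0 by rewrite gt_eqF // lam_gt0.
rewrite le_eqVlt; apply/orP; left; apply/eqP; field; exact: Hl0.
Qed.

Lemma Fpay_le1 s k : `|Fpay gamma n1 s k| <= 1.
Proof.
rewrite /Fpay; case: (_ <= n1)%N; last by rewrite normr0.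
by case: eqP => _; rewrite ?normr1 // ger0_norm.
Qed.

Lemma num_ineq M l : q * (KK * rho ^+ M * lam ^+ l.+3) +
  p * (r0 ^+ M * lam ^+ l.+1 + KK * rho ^+ M * lam ^+ l.+1) <=
  KK * rho ^+ M.+1 * lam ^+ l.+2.
Proof.
have H1 : r0 ^+ M <= rho ^+ M.
  by apply: lerXn2r; rewrite ?nnegrE ?r0_ge0 ?rho_ge0 // ltW // r0_rho.
have Hl0 : 0 <= lam ^+ l.+1 by rewrite exprn_ge0 // ltW // lam_gt0.
apply: (@le_trans _ _ (q * (KK * rho ^+ M * lam ^+ l.+3) +
  p * (rho ^+ M * lam ^+ l.+1 + KK * rho ^+ M * lam ^+ l.+1))).
  by rewrite lerD2l ler_wpM2l ?(ltW hp0) // lerD2r ler_wpM2r.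
rewrite -subr_le0.
have Hl : lam != 0 by rewrite gt_eqF // lam_gt0.
have -> : q * (KK * rho ^+ M * lam ^+ l.+3) +
  p * (rho ^+ M * lam ^+ l.+1 + KK * rho ^+ M * lam ^+ l.+1) -
  KK * rho ^+ M.+1 * lam ^+ l.+2 =
  (rho ^+ M * lam ^+ l) * lam * (p - KK * lam * (rho - r0)).
  rewrite /r0 !exprS; field; exact: Hl.
apply: mulr_ge0_le0.
  by rewrite !mulr_ge0 ?exprn_ge0 ?rho_ge0 // ltW // lam_gt0.
rewrite subr_le0; apply: le_trans KK_ge _.
rewrite -mulrA ler_wpM2l ?KK_ge0 // ler_peMl // ?lam_ge1 // subr_ge0 ltW // r0_rho.
done.
Qed.

Lemma E_bound M s k : (k < s)%N ->
  `|Phi R p q gamma n1 s k - ZC R p q gamma n1 M s k| <= KK * rho ^+ M * lam ^+ (s - k).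
Proof.
elim: M s k => [|M IH] s k Hks.
  rewrite ZC0 subr0 expr0 mulr1.
  apply: le_trans (@Phi_bound R p q gamma n1 hpq hq0 hqp s k hg0 hg1) _.
  apply: (@le_trans _ _ KK).
    by rewrite /KK lerDl divr_ge0 ?(ltW hp0) // subr_ge0 ltW // r0_rho.
  by rewrite ler_peMr ?KK_ge0 // exprn_ege1 // lam_ge1.
rewrite ZCS; case: (ltnP k.+1 s) => Hne; last first.
  have -> : s = k.+1 by lia.
  rewrite /= ?mulr0n mul0r (@Phi1 R p q gamma n1 hq0 hqp hn1) subr0 normr0.
  by rewrite !mulr_ge0 ?KK_ge0 ?exprn_ge0 ?rho_ge0 // ltW // lam_gt0.
have Hk2 : (k.+2 <= s)%N by lia.
rewrite /= ?mulr1n mul1r (@Phi_rec R p q gamma n1 hpq hq0 hqp hn1 s k Hk2).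
set F := Fpay gamma n1 s k.
have -> : q * Phi R p q gamma n1 s.+1 k + p * (F + Phi R p q gamma n1 s k.+1) -
   (q * ZC R p q gamma n1 M s.+1 k + p * (F * PC R p q M s k.+1 + ZC R p q gamma n1 M s k.+1)) =
   q * (Phi R p q gamma n1 s.+1 k - ZC R p q gamma n1 M s.+1 k) +
   p * (F * (1 - PC R p q M s k.+1) + (Phi R p q gamma n1 s k.+1 - ZC R p q gamma n1 M s k.+1))
   by ring.
have [B1 B2] := @B_bound M s k.+1 Hk2.
have IHa := IH s.+1 k (ltnW (ltnW Hk2)).
have IHb := IH s k.+1 Hk2.
have [l Hl] : exists l, (s - k = l.+2)%N by exists (s - k - 2)%N; lia.
have E1 : (s.+1 - k = l.+3)%N by lia.
have E2 : (s - k.+1 = l.+1)%N by lia.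
rewrite E1 in IHa; rewrite E2 in IHb B2; rewrite Hl.
have HF : `|F * (1 - PC R p q M s k.+1)| <= r0 ^+ M * lam ^+ l.+1.
  rewrite normrM (ger0_norm B1); apply: le_trans _ B2.
  by rewrite -[X in _ <= X]mul1r ler_wpM2r // Fpay_le1.
apply: le_trans (ler_normD _ _) _.
rewrite !normrM (ger0_norm (ltW hq0)) (ger0_norm (ltW hp0)).
apply: le_trans (num_ineq M l).
apply: lerD; first by rewrite ler_wpM2l ?(ltW hq0).
rewrite ler_wpM2l ?(ltW hp0) //.
by apply: le_trans (ler_normD _ _) _; apply: lerD.
Qed.
End Err.
Arguments Fpay {R}. Arguments Z {R}. Arguments P {R}. Arguments Dg {R}. Arguments wt {R}.

Lemma forall_iota (n : nat) (P : pred nat) :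
  [forall i : 'I_n, P i] = all P (iota 0 n).
Proof.
apply/forallP/allP => [H j|H j]; last by apply: H; rewrite mem_iota add0n ltn_ord.
by rewrite mem_iota add0n => /andP[_ Hj]; exact: (H (Ordinal Hj)).
Qed.

Lemma take_rcons_le (w : seq bool) b j : (j <= size w)%N -> take j (rcons w b) = take j w.
Proof. by move=> H; rewrite -cats1 takel_cat. Qed.

Lemma hitg_rcons w b : hitg 2 0 (rcons w b) = (~~ b) && dyck w.
Proof.
rewrite hitg_char size_rcons /dyck (forall_iota (size w).+1 (fun j => count negb (take j w) <= count id (take j w))%N).
rewrite (eq_in_all (a2 := fun j => (count negb (take j w) <= count id (take j w))%N)); last first.
  move=> j; rewrite mem_iota add0n ltnS => /andP[_ Hj].
  rewrite /nH_before /nS_before take_rcons_le //; apply/idP/idP; lia.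
set A := all _ _.
have Hlast : A -> (count negb w <= count id w)%N.
  by move=> Ha; have := allP Ha (size w); rewrite mem_iota add0n ltnSn take_size; apply.
clearbody A.
rewrite -!cats1 !count_cat /=.
case: b => /=.
  apply/negbTE; apply/negP => /andP[Ha He].
  have := Hlast Ha; move: He; move/eqP; lia.
congr (_ && _); apply/eqP/eqP; lia.
Qed.

Section Links.
Variables (R : realType) (p q gamma : R) (n1 : nat).

Lemma wtE u : wt p q u = q ^+ (count id u) * p ^+ (count negb u).
Proof.
elim: u => [|b u IH]; first by rewrite /wt big_nil mulr1.
by rewrite /wt big_cons -/(wt p q u) IH; case: b => /=; rewrite ?add0n exprS; ring.
Qed.

Lemma count_size u : (count id u + count negb u)%N = size u.
Proof. by have := count_predC id u. Qed.

Lemma Z_even n : Z p q gamma n1 (2 * n) 2 0 = 0.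
Proof.
rewrite /Z big_seq big1 // => u; rewrite allseq_mem => /eqP Hu.
rewrite hitg_char; have := count_size u; rewrite Hu => Hc.
have -> : (2 + count id u == 0 + count negb u + 1)%N = false by apply/eqP; lia.
by rewrite andbF !mul0r.
Qed.

Lemma Ecyc_SSwH w : dyck w ->
  Ecyc gamma n1 (true :: true :: rcons w false) = Dg gamma n1 2 0 (rcons w false).
Proof.
move=> Hd.
rewrite Ecyc_formula //; last first.
  case=> [|[|j]] //= Hj _.
  rewrite /nH_before /nS_before /= add0n.
  rewrite take_rcons_le; last by move: Hj; rewrite size_rcons; lia.
  move: Hd => /andP[/forallP Hf _].
  have Hj' : (j < (size w).+1)%N by move: Hj; rewrite size_rcons; lia.
  have := Hf (Ordinal Hj'); rewrite /=; lia.
have -> : Dg gamma n1 2 0 (rcons w false) = Dg gamma n1 0 0 (true :: true :: rcons w false) by [].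
by rewrite Dg_sum.
Qed.
End Links.

Section Links2.
Variables (R : realType) (p q gamma : R) (n1 : nat).
Hypothesis hn1 : (2 <= n1)%N.

Lemma Ecyc_H : Ecyc gamma n1 [:: false] = 0.
Proof. by rewrite /Ecyc big1 // => c _; rewrite /Uc /= mulr0. Qed.

Lemma Ecyc_SHS : Ecyc gamma n1 [:: true; false; true] = 1.
Proof.
rewrite Ecyc_formula //; last by case=> [|[|[|i]]].
rewrite /= !big_cons big_nil /= /Fpay /=.
have -> : (nS_before [:: true; false; true] 1 - nH_before [:: true; false; true] 1 <= n1)%N.
  by rewrite /nS_before /nH_before /=; apply: ltnW.
by rewrite /= !(add0r, addr0).
Qed.

Lemma Ecyc_SHH : Ecyc gamma n1 [:: true; false; false] = 1.
Proof.
rewrite /Ecyc.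
transitivity (\sum_(c : (count negb [:: true; false; false]).-tuple bool)
     (\prod_(b <- c) (if b then gamma else 1 - gamma))).
  apply: eq_bigr => c _.
  have -> : Uc n1 (cycle_blocks [:: true; false; false] c) = 1%N.
    case: n1 hn1 => [|[|m]] // _.
    by rewrite /cycle_blocks /=; case: (nth false c 1); rewrite /Uc /is_uncle /referred /tip /=.
  by rewrite mulr1.
by rewrite (@tuple_sumE _ _ (fun s => \prod_(b <- s) (if b then gamma else 1 - gamma))) (sum_prod1 R gamma).
Qed.

Lemma sum_link n :
  \sum_(w : (2 * n).-tuple bool | dyck w)
     q ^+ 2 * p * (p * q) ^+ n * Ecyc gamma n1 (true :: true :: rcons w false)
  = q ^+ 2 * Z p q gamma n1 (2 * n).+1 2 0.
Proof.
rewrite big_mkcond /=.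
rewrite (@tuple_sumE _ _ (fun w => if dyck w then q ^+ 2 * p * (p * q) ^+ n *
   Ecyc gamma n1 (true :: true :: rcons w false) else 0)).
rewrite /Z allseq_sum_rcons mulr_sumr big_seq [RHS]big_seq.
apply: eq_bigr => w; rewrite allseq_mem => /eqP Hw.
rewrite !hitg_rcons /= mul0r mul0r add0r.
case Hd: (dyck w); last by rewrite /= !mul0r mulr0.
rewrite Ecyc_SSwH // /= mul1r.
have Hc : count id w = n /\ count negb w = n.
  move: Hd => /andP[_ /eqP He]; have := count_size w; rewrite Hw; lia.
rewrite !wtE -!cats1 !count_cat Hc.1 Hc.2 /= !addn0 addn1 exprMn (exprS p n); ring.
Qed.
End Links2.
Arguments Fpay {R}. Arguments Z {R}. Arguments P {R}. Arguments Dg {R}. Arguments wt {R}.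

Lemma ZC_even (R : realType) (p q gamma : R) n1 N :
  ZC R p q gamma n1 (2 * N) 2 0 = \sum_(n < N) Z p q gamma n1 (2 * n).+1 2 0.
Proof.
elim: N => [|N IH]; first by rewrite muln0 ZC0 big_ord0.
rewrite big_ord_recr /= -IH /ZC.
have -> : (2 * N.+1 = (2 * N).+2)%N by lia.
by rewrite !big_ord_recr /= Z_even addr0.
Qed.

Lemma EU_formula (R : realType) (p q gamma : R) n1 N : (2 <= n1)%N ->
  EU_partial p q gamma n1 N = p * q ^+ 2 + p ^+ 2 * q + q ^+ 2 * ZC R p q gamma n1 (2 * N) 2 0.
Proof.
move=> hn1; rewrite /EU_partial Ecyc_H (@Ecyc_SHS _ _ _ hn1) (@Ecyc_SHH _ _ _ hn1).
rewrite ZC_even mulr_sumr mulr0 add0r !mulr1.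
congr (_ + _); apply: eq_bigr => n _; exact: sum_link.
Qed.

Lemma target_eq (R : realType) (p q gamma : R) (n1 : nat)
  (hpq : p + q = 1) (hq0 : 0 < q) (hqp : q < p) (hn1 : (2 <= n1)%N) :
  q + q ^+ 3 * gamma / (p - q)
      - p ^+ 3 / (p - q) * (q / p) ^+ n1.+1 * gamma
      - q ^+ n1.+1 * (1 - gamma) =
  p * q ^+ 2 + p ^+ 2 * q + q ^+ 2 * Phi R p q gamma n1 2 0.
Proof.
rewrite /Phi /gg /Psi /GG /DD /aa /rr /=.
rewrite (minn_idPl hn1) hn1 /=.
case: n1 hn1 => [|[|m]] // _.
have -> : (m.+2 - (2 - 0) = m)%N by lia.
rewrite /=.
have hp0 : 0 < p by apply: lt_trans hqp.
have Hp : p = 1 - q by rewrite -hpq addrK.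
rewrite !expr_div_n !exprS.
have HP : p ^+ m != 0 by rewrite expf_neq0 // gt_eqF.
have HQ : q ^+ m != 0 by rewrite expf_neq0 // gt_eqF.
move: HP HQ; set P := p ^+ m; set Q := q ^+ m => HP HQ; clearbody P Q.
have Hq : q != 0 by rewrite gt_eqF.
have Hpq : p - q != 0 by rewrite subr_eq0 gt_eqF.
have Hp' : p != 0 by rewrite gt_eqF.
rewrite Hp in Hpq Hp' *.
field; rewrite Hq Hpq Hp' HP HQ //.
Qed.

Local Open Scope classical_set_scope.

Theorem proposition7 (R : realType) (p q gamma : R) (n1 : nat)
  (hpq : p + q = 1) (hq0 : 0 < q) (hqp : q < p)
  (hg0 : 0 <= gamma) (hg1 : gamma <= 1) (hn1 : (2 <= n1)%N) :
  (EU_partial p q gamma n1 : nat -> R) @ \oo -->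
    q + q ^+ 3 * gamma / (p - q)
      - p ^+ 3 / (p - q) * (q / p) ^+ n1.+1 * gamma
      - q ^+ n1.+1 * (1 - gamma).
Proof.
rewrite (@target_eq R p q gamma n1 hpq hq0 hqp hn1).
set T := _ + _ + _.
set c := q ^+ 2 * KK R p q n1 * lam R q ^+ 2.
set z := rho R p q ^+ 2.
have Hz : `|z| < 1.
  have H0 := @rho_ge0 R p q hq0 hqp; have H1 := @rho_lt1 R p q hpq hq0 hqp.
  rewrite /z ger0_norm ?exprn_ge0 //.
  by rewrite expr2 mulr_ilt1.
have He : (fun N => c * z ^+ N) @ \oo --> 0.
  by rewrite -(mulr0 c); apply: cvgMl_tmp; apply: cvg_expr.
apply: (@squeeze_cvgr _ _ _ _ (fun N => T - c * z ^+ N) (fun N => T + c * z ^+ N)).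
- apply: nearW => N; rewrite -ler_distl.
  rewrite (@EU_formula R p q gamma n1 N hn1) /T.
  have -> : p * q ^+ 2 + p ^+ 2 * q + q ^+ 2 * ZC R p q gamma n1 (2 * N) 2 0 -
    (p * q ^+ 2 + p ^+ 2 * q + q ^+ 2 * Phi R p q gamma n1 2 0) =
    - (q ^+ 2 * (Phi R p q gamma n1 2 0 - ZC R p q gamma n1 (2 * N) 2 0)) by ring.
  rewrite normrN normrM ger0_norm ?exprn_ge0 ?(ltW hq0) //.
  have := @E_bound R p q gamma n1 hpq hq0 hqp hg0 hg1 hn1 (2 * N) 2 0 isT.
  rewrite /c /z -exprM subn0 => H.
  apply: le_trans (ler_wpM2l (exprn_ge0 2 (ltW hq0)) H) _.
  rewrite le_eqVlt; apply/orP; left; apply/eqP.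
  set Y := rho R p q ^+ (2 * N); ring.
- rewrite -[X in _ --> X]subr0; apply: cvgB => //; exact: cvg_cst.
- rewrite -[X in _ --> X]addr0; apply: cvgD => //; exact: cvg_cst.
Qed.
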